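(* Let $A, C, D$ be binary random variables, with $A$ taking values $a,\overline{a}$, $C$ taking values $c,\overline{c}$, $D$ taking values $d,\overline{d}$, and let $Y$ be a real random variable with finite expectation. Suppose the joint distribution factorizes as \[ p(A,C,D,Y)=p(C)\,p(D\mid C)\,p(A\mid C)\,p(Y\mid A,C). \] Assume that $C$ and $D$ are dependent, and that every event $\{A=x, C=y, D=z\}$ has positive probability. If $E[Y\mid A,D]$ is monotone in $D$, then $RD_{obs}$ lies between $RD_{true}$ and $RD_{crude}$ (i.e. $\min(RD_{true},RD_{crude})\le RD_{obs}\le \max(RD_{true},RD_{crude})$).
   Context: Define $RD_{true}=E[Y|a,c]p(c)+E[Y|a,\overline{c}]p(\overline{c})-E[Y|\overline{a},c]p(c)-E[Y|\overline{a},\overline{c}]p(\overline{c})$ (the average causal effect of $A$ on $Y$), $RD_{crude}=E[Y|a]-E[Y|\overline{a}]$, and $RD_{obs}=E[Y|a,d]p(d)+E[Y|a,\overline{d}]p(\overline{d})-E[Y|\overline{a},d]p(d)-E[Y|\overline{a},\overline{d}]p(\overline{d})$. $E[Y\mid A,D]$ is nondecreasing in $D$ if $E[Y\mid a,d]\ge E[Y\mid a,\overline{d}]$ and $E[Y\mid \overline{a},d]\ge E[Y\mid \overline{a},\overline{d}]$; nonincreasing if both inequalities are reversed; monotone if it is either. *)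

(* Defs.v *)
From HB Require Import structures.
From mathcomp Require Import all_boot all_order all_algebra.
From mathcomp Require Import all_classical all_reals all_analysis.
Set Implicit Arguments. Unset Strict Implicit. Unset Printing Implicit Defensive.
Import Order.TTheory GRing.Theory Num.Theory.
Local Open Scope classical_set_scope.
Local Open Scope ring_scope.

(* A binary random variable X on T is represented by the (measurable) event
   EX = {X = x}; {X = xbar} is its complement.  [ev b E] is the event
   {X = x} when b = true and {X = xbar} when b = false. *)
Definition ev {T : Type} (b : bool) (E : set T) : set T :=
  if b then E else ~` E.

Section Defs.
Context {R : realType} {d : measure_display} {T : measurableType d}.
Variable P : probability T R.

Definition pr (E : set T) : R := fine (P E).

Definition cpr (E F : set T) : R := pr (E `&` F) / pr F.

Definition cexp (Y : T -> R) (F : set T) : R :=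
  fine (\int[P]_(w in F) (Y w)%:E) / pr F.

Variables (EA EC ED : set T) (Y : T -> R).

Definition EYAC (x y : bool) : R := cexp Y (ev x EA `&` ev y EC).
Definition EYAD (x z : bool) : R := cexp Y (ev x EA `&` ev z ED).

Definition RD_true : R :=
  EYAC true true * pr EC + EYAC true false * pr (~` EC)
  - EYAC false true * pr EC - EYAC false false * pr (~` EC).

Definition RD_crude : R := cexp Y EA - cexp Y (~` EA).

Definition RD_obs : R :=
  EYAD true true * pr ED + EYAD true false * pr (~` ED)
  - EYAD false true * pr ED - EYAD false false * pr (~` ED).

Definition nondecreasing_in_D : Prop :=
  EYAD true true >= EYAD true false /\ EYAD false true >= EYAD false false.
Definition nonincreasing_in_D : Prop :=
  EYAD true true <= EYAD true false /\ EYAD false true <= EYAD false false.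
Definition monotone_in_D : Prop := nondecreasing_in_D \/ nonincreasing_in_D.

End Defs.

(* Main.v *)
Require Import Defs.
From HB Require Import structures.
From mathcomp Require Import all_boot all_order all_algebra.
From mathcomp Require Import all_classical all_reals all_analysis.
From mathcomp Require Import measurable_realfun.
From mathcomp Require Import ring lra.
Import Order.TTheory GRing.Theory Num.Theory.
Local Open Scope classical_set_scope.
Local Open Scope ring_scope.

Section Alg.
Variable R : realFieldType.

Lemma superadd (a1 a0 u v u' v' : R) : 0 < a1 -> 0 < a0 -> 0 < u -> 0 < v -> 0 < u' -> 0 < v' ->
  u * v / (a1 * u + a0 * v) + u' * v' / (a1 * u' + a0 * v') <=
  (u + u') * (v + v') / (a1 * (u + u') + a0 * (v + v')).
Proof.
move=> ha1 ha0 hu hv hu' hv'.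
have d1 : 0 < a1 * u + a0 * v by nra.
have d2 : 0 < a1 * u' + a0 * v' by nra.
have d3 : 0 < a1 * (u + u') + a0 * (v + v') by nra.
rewrite -subr_ge0.
have -> : (u + u') * (v + v') / (a1 * (u + u') + a0 * (v + v')) -
  (u * v / (a1 * u + a0 * v) + u' * v' / (a1 * u' + a0 * v')) =
  a1 * a0 * (u * v' - u' * v) ^+ 2 / ((a1 * u + a0 * v) * (a1 * u' + a0 * v') * (a1 * (u + u') + a0 * (v + v'))).
  by field; rewrite (gt_eqF d1) (gt_eqF d2) (gt_eqF d3).
apply: divr_ge0; first by apply: mulr_ge0; [nra | exact: sqr_ge0].
by rewrite !mulr_ge0 // ltW.
Qed.

Definition ee (a1 a0 m1 m0 p1 p0 : R) := (p1 * a1 * m1 + p0 * a0 * m0) / (p1 * a1 + p0 * a0).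

Lemma one_x (u11 u10 u01 u00 a1 a0 m1 m0 : R) :
  0 < u11 -> 0 < u10 -> 0 < u01 -> 0 < u00 -> u11 + u10 + u01 + u00 = 1 ->
  0 < a1 -> 0 < a0 ->
  [/\ ee a1 a0 m1 m0 u11 u01 * (u11 + u01) + ee a1 a0 m1 m0 u10 u00 * (u10 + u00)
        - (m1 * (u11 + u10) + m0 * (u01 + u00))
      = (a1 - a0) * (m1 - m0) *
        (u11 * u01 / (a1 * u11 + a0 * u01) + u10 * u00 / (a1 * u10 + a0 * u00)),
      ee a1 a0 m1 m0 (u11 + u10) (u01 + u00) - (m1 * (u11 + u10) + m0 * (u01 + u00))
      = (a1 - a0) * (m1 - m0) *
        ((u11 + u10) * (u01 + u00) / (a1 * (u11 + u10) + a0 * (u01 + u00))),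
      ee a1 a0 m1 m0 u11 u01 - ee a1 a0 m1 m0 u10 u00 =
        (m1 - m0) * (a1 * a0 * (u11 * u00 - u10 * u01) /
          ((u11 * a1 + u01 * a0) * (u10 * a1 + u00 * a0))) &
      0 <= u11 * u01 / (a1 * u11 + a0 * u01) + u10 * u00 / (a1 * u10 + a0 * u00) <=
        (u11 + u10) * (u01 + u00) / (a1 * (u11 + u10) + a0 * (u01 + u00))].
Proof.
move=> h11 h10 h01 h00 hs ha1 ha0.
have d1 : 0 < a1 * u11 + a0 * u01 by nra.
have d2 : 0 < a1 * u10 + a0 * u00 by nra.
have d3 : 0 < a1 * (u11 + u10) + a0 * (u01 + u00) by nra.
have d1' : 0 < u11 * a1 + u01 * a0 by nra.
have d2' : 0 < u10 * a1 + u00 * a0 by nra.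
have d3' : 0 < (u11 + u10) * a1 + (u01 + u00) * a0 by nra.
have hu0 : u01 + u00 = 1 - u11 - u10 by lra.
have hu00 : u00 = 1 - u11 - u10 - u01 by lra.
split; rewrite /ee.
- move: d1 d2 d1' d2'; rewrite hu00 => d1 d2 d1' d2'; field.
  by rewrite (gt_eqF d1) (gt_eqF d2).
- move: d3 d3'; rewrite hu00 => d3 d3'; field.
  by rewrite (gt_eqF d3).
- field.
  by rewrite (gt_eqF d1') (gt_eqF d2').
- apply/andP; split.
    by apply: addr_ge0; apply: divr_ge0; nra.
  exact: superadd.
Qed.


Lemma alg (u11 u10 u01 u00 r1 r0 m11 m10 m01 m00 : R) :
  0 < u11 -> 0 < u10 -> 0 < u01 -> 0 < u00 -> u11 + u10 + u01 + u00 = 1 ->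
  0 < r1 < 1 -> 0 < r0 < 1 -> u11 * u00 != u10 * u01 ->
  (ee r1 r0 m11 m10 u10 u00 <= ee r1 r0 m11 m10 u11 u01 /\
   ee (1 - r1) (1 - r0) m01 m00 u10 u00 <= ee (1 - r1) (1 - r0) m01 m00 u11 u01) \/
  (ee r1 r0 m11 m10 u11 u01 <= ee r1 r0 m11 m10 u10 u00 /\
   ee (1 - r1) (1 - r0) m01 m00 u11 u01 <= ee (1 - r1) (1 - r0) m01 m00 u10 u00) ->
  forall X K O : R,
  X = m11 * (u11 + u10) + m10 * (u01 + u00) - m01 * (u11 + u10) - m00 * (u01 + u00) ->
  K = ee r1 r0 m11 m10 (u11 + u10) (u01 + u00)
           - ee (1 - r1) (1 - r0) m01 m00 (u11 + u10) (u01 + u00) ->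
  O = ee r1 r0 m11 m10 u11 u01 * (u11 + u01) + ee r1 r0 m11 m10 u10 u00 * (u10 + u00)
         - ee (1 - r1) (1 - r0) m01 m00 u11 u01 * (u11 + u01)
         - ee (1 - r1) (1 - r0) m01 m00 u10 u00 * (u10 + u00) ->
  Num.min X K <= O <= Num.max X K.
Proof.
move=> h11 h10 h01 h00 hs /andP[r1p r1l] /andP[r0p r0l] hD mono X K O eX eK0 eO0.
pose S1 := u11 * u01 / (r1 * u11 + r0 * u01) + u10 * u00 / (r1 * u10 + r0 * u00).
pose T1 := (u11 + u10) * (u01 + u00) / (r1 * (u11 + u10) + r0 * (u01 + u00)).
pose S0 := u11 * u01 / ((1 - r1) * u11 + (1 - r0) * u01) + u10 * u00 / ((1 - r1) * u10 + (1 - r0) * u00).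
pose T0 := (u11 + u10) * (u01 + u00) / ((1 - r1) * (u11 + u10) + (1 - r0) * (u01 + u00)).
pose g1 := r1 * r0 * (u11 * u00 - u10 * u01) / ((u11 * r1 + u01 * r0) * (u10 * r1 + u00 * r0)).
pose g0 := (1 - r1) * (1 - r0) * (u11 * u00 - u10 * u01) /
    ((u11 * (1 - r1) + u01 * (1 - r0)) * (u10 * (1 - r1) + u00 * (1 - r0))).
pose d1 := m11 - m10.
pose d0 := m01 - m00.
have q1p : 0 < 1 - r1 by lra.
have q0p : 0 < 1 - r0 by lra.
have [a1 b1 c1 /andP[s1p s1t]] := one_x _ _ _ _ _ _ m11 m10 h11 h10 h01 h00 hs r1p r0p.
have [a0 b0 c0 /andP[s0p s0t]] := one_x _ _ _ _ _ _ m01 m00 h11 h10 h01 h00 hs q1p q0p.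
rewrite -/S1 -/T1 -/g1 -/d1 in a1 b1 c1 s1p s1t.
rewrite -/S0 -/T0 -/g0 -/d0 in a0 b0 c0 s0p s0t.
have e10 : 1 - r1 - (1 - r0) = - (r1 - r0) by ring.
rewrite e10 in a0 b0.
have eO : O = X + (r1 - r0) * (d1 * S1 + d0 * S0).
  rewrite eO0 eX.
  lra.
have eK : K = X + (r1 - r0) * (d1 * T1 + d0 * T0).
  rewrite eK0 eX; lra.
have gpos : forall a b : R, 0 < a -> 0 < b ->
   0 < a * b / ((u11 * a + u01 * b) * (u10 * a + u00 * b)).
  move=> a b ha hb; apply: divr_gt0; first exact: mulr_gt0.
  by apply: mulr_gt0; nra.
have sgn : (0 <= d1 /\ 0 <= d0) \/ (d1 <= 0 /\ d0 <= 0).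
  have hg1 : g1 = r1 * r0 / ((u11 * r1 + u01 * r0) * (u10 * r1 + u00 * r0)) * (u11 * u00 - u10 * u01).
    by rewrite /g1 mulrAC.
  have hg0 : g0 = (1 - r1) * (1 - r0) / ((u11 * (1 - r1) + u01 * (1 - r0)) * (u10 * (1 - r1) + u00 * (1 - r0))) * (u11 * u00 - u10 * u01).
    by rewrite /g0 mulrAC.
  move: (gpos _ _ r1p r0p) (gpos _ _ q1p q0p) => p1 p0.
  move: hg1 hg0 p1 p0.
  set k1 := _ / _; set k0 := _ / _.
  move=> hg1 hg0 p1 p0.
  have hD' : u11 * u00 - u10 * u01 != 0 by rewrite subr_eq0.
  case: (ltrgt0P (u11 * u00 - u10 * u01)) hD' => // hDs _.
  - have g1p : 0 < g1 by rewrite hg1; apply: mulr_gt0.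
    have g0p : 0 < g0 by rewrite hg0; apply: mulr_gt0.
    case: mono => [[m1 m2]|[m1 m2]].
    + left; split; nra.
    + right; split; nra.
  - have g1p : g1 < 0 by rewrite hg1; rewrite pmulr_rlt0.
    have g0p : g0 < 0 by rewrite hg0; rewrite pmulr_rlt0.
    case: mono => [[m1 m2]|[m1 m2]].
    + right; split; nra.
    + left; split; nra.
have hst : (0 <= d1 * S1 + d0 * S0 <= d1 * T1 + d0 * T0) \/
           (d1 * T1 + d0 * T0 <= d1 * S1 + d0 * S0 <= 0).
  case: sgn => [[p q]|[p q]]; [left|right]; apply/andP; split; nra.
rewrite eO eK.
case: (lerP 0 (r1 - r0)) => hr; case: hst => /andP[h1 h2].
- have u1 : 0 <= (r1 - r0) * (d1 * S1 + d0 * S0) by nra.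
  have u2 : (r1 - r0) * (d1 * S1 + d0 * S0) <= (r1 - r0) * (d1 * T1 + d0 * T0) by nra.
  rewrite ge_min le_max; apply/andP; split; apply/orP; [left|right]; lra.
- have u1 : (r1 - r0) * (d1 * S1 + d0 * S0) <= 0 by nra.
  have u2 : (r1 - r0) * (d1 * T1 + d0 * T0) <= (r1 - r0) * (d1 * S1 + d0 * S0) by nra.
  rewrite ge_min le_max; apply/andP; split; apply/orP; [right|left]; lra.
- have u1 : (r1 - r0) * (d1 * S1 + d0 * S0) <= 0 by nra.
  have u2 : (r1 - r0) * (d1 * T1 + d0 * T0) <= (r1 - r0) * (d1 * S1 + d0 * S0) by nra.
  rewrite ge_min le_max; apply/andP; split; apply/orP; [right|left]; lra.
- have u1 : 0 <= (r1 - r0) * (d1 * S1 + d0 * S0) by nra.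
  have u2 : (r1 - r0) * (d1 * S1 + d0 * S0) <= (r1 - r0) * (d1 * T1 + d0 * T0) by nra.
  rewrite ge_min le_max; apply/andP; split; apply/orP; [left|right]; lra.
Qed.

End Alg.

Section M.
Context (R : realType) (d : measure_display) (T : measurableType d) (P : probability T R).

Lemma int_mscale (m : {measure set R -> \bar R}) (k : {nonneg R}) (D : set R) :
  measurable D -> m.-integrable D EFin ->
  (\int[mscale k m]_(y in D) y%:E = k%:num%:E * \int[m]_(y in D) y%:E)%E.
Proof.
move=> mD iD.
have mE : measurable_fun D (@EFin R) by apply/measurable_EFinP; exact: measurable_id.
have h1 := @ge0_integral_mscale _ _ _ m D mD k _ (measurable_funepos mE) (fun x _ => funepos_ge0 _ x).
have h2 := @ge0_integral_mscale _ _ _ m D mD k _ (measurable_funeneg mE) (fun x _ => funeneg_ge0 _ x).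
rewrite integralE [in RHS]integralE h1 h2.
rewrite [RHS]muleBr; [by [] | by [] |].
apply: fin_num_adde_defl; rewrite fin_numN.
exact: integrable_neg_fin_num.
Qed.


Lemma prE (S : set T) : measurable S -> P S = (pr P S)%:E.
Proof. by move=> mS; rewrite /pr fineK // fin_num_measure. Qed.

Section phi.
Variables (Y : {RV P >-> R}) (iY : P.-integrable setT (EFin \o Y)).
Variables (S : set T) (mS : measurable S).

Let phi : {mfun T >-> R} := (Y * indic_mfun S mS)%R.

Let phiE w : phi w = Y w * \1_S w.
Proof. by []. Qed.

Let iphi : P.-integrable setT (EFin \o phi).
Proof.
apply: (@le_integrable _ _ _ P setT measurableT _ (EFin \o Y)) => //.
  apply/measurable_EFinP; exact: measurable_funP.
move=> w _; change (`|(phi w)%:E| <= `|(Y w)%:E|)%E; rewrite phiE lee_fin normrM indicE.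
by case: (w \in S); rewrite ?normr1 ?normr0 ?mulr1 ?mulr0.
Qed.

Lemma int_phi : (\int[P]_(w in S) (Y w)%:E =
   \int[distribution P phi]_(y in ~` [set 0%R]) y%:E)%E.
Proof.
rewrite integral_mkcond.
transitivity (\int[P]_w (EFin \o phi) w)%E.
  apply: eq_integral => w _; rewrite patchE; change ((if w \in S then (Y w)%:E else 0%E) = (phi w)%:E); rewrite phiE indicE.
  by case: (w \in S); rewrite ?mulr1 ?mulr0.
rewrite -integral_distribution //.
rewrite [RHS]integral_mkcond; apply: eq_integral => y _; rewrite patchE.
case: ifP => //.
by case: (pselect (y = 0%R)) => [-> //|h]; rewrite mem_set.
Qed.

Lemma int_phi_integrable : (distribution P phi).-integrable (~` [set 0%R]) EFin.
Proof.
apply: (integrableS measurableT) => //.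
  by apply: measurableC.
apply/integrableP; split.
  by apply/measurable_EFinP; exact: measurable_id.
rewrite (@ge0_integral_distribution _ _ _ _ _ P phi (abse \o EFin)) //.
  by move/integrableP : iphi => [_].
  apply: measurableT_comp => //; apply/measurable_EFinP; exact: measurable_id.
by move=> y; exact: abse_ge0.
Qed.

Lemma phi_pre (A : set R) : A `<=` ~` [set 0%R] -> phi @^-1` A = S `&` Y @^-1` A.
Proof.
move=> A0; apply/seteqP; split => w.
- change (A (phi w) -> S w /\ A (Y w)); rewrite phiE indicE.
  case: (boolP (w \in S)) => h; rewrite ?mulr1 ?mulr0.
    by move=> ?; split => //; exact: set_mem.
  by move=> /A0 /(_ erefl).
- move=> [Sw Aw]; change (A (phi w)); rewrite phiE indicE mem_set // mulr1.
  exact: Aw.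
Qed.

End phi.


Lemma prop_int (Y : {RV P >-> R}) (iY : P.-integrable setT (EFin \o Y))
  (S1 S2 : set T) (mS1 : measurable S1) (mS2 : measurable S2) (k : R) :
  0 <= k ->
  (forall B, measurable B -> pr P (S1 `&` Y @^-1` B) = k * pr P (S2 `&` Y @^-1` B)) ->
  (\int[P]_(w in S1) (Y w)%:E = k%:E * \int[P]_(w in S2) (Y w)%:E)%E.
Proof.
move=> k0 hB.
rewrite (int_phi Y iY S1 mS1) (int_phi Y iY S2 mS2).
have -> : k%:E = (NngNum k0)%:num%:E by [].
rewrite -int_mscale; last first.
- exact: int_phi_integrable iY _ _.
- by apply: measurableC.
apply: eq_measure_integral => A mA A0.
change (P ((Y * indic_mfun S1 mS1)%R @^-1` A) =
  (k%:E * P ((Y * indic_mfun S2 mS2)%R @^-1` A))%E).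
rewrite (phi_pre Y S1 mS1 A A0) (phi_pre Y S2 mS2 A A0).
have mYA : measurable (Y @^-1` A) by rewrite -[_ @^-1` _]setTI; exact: (measurable_funP Y).
rewrite prE; last exact: measurableI.
rewrite [X in (_ * X)%E]prE; last exact: measurableI.
by rewrite hB.
Qed.


Ltac seteq := apply/seteqP; split => w /=; rewrite /setI /setC /setU /set0 /=; tauto.

Lemma pr_split (A E : set T) : measurable A -> measurable E ->
  pr P A = pr P (A `&` E) + pr P (A `&` ~` E).
Proof.
move=> mA mE.
have mAE : measurable (A `&` E) by exact: measurableI.
have mAE' : measurable (A `&` ~` E) by apply: measurableI => //; exact: measurableC.
rewrite /pr -fineD; try exact: fin_num_measure.
rewrite -measureU //; last by seteq.
by rewrite -setIUr setUv setIT.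
Qed.

Lemma pr_splitM (A C D : set T) : measurable A -> measurable C -> measurable D ->
  pr P (A `&` D) = pr P (A `&` C `&` D) + pr P (A `&` ~` C `&` D).
Proof.
move=> mA mC mD; rewrite (@pr_split _ C _ mC); last exact: measurableI.
by congr (_ + _); congr (_ _); seteq.
Qed.

Lemma pr_splitA (A B C : set T) : measurable A -> measurable B -> measurable C ->
  pr P (B `&` C) = pr P (A `&` B `&` C) + pr P (~` A `&` B `&` C).
Proof.
move=> mA mB mC; rewrite (@pr_split _ A _ mA); last exact: measurableI.
by congr (pr P _ + pr P _); seteq.
Qed.

Lemma pr_splitA1 (A C : set T) : measurable A -> measurable C ->
  pr P C = pr P (A `&` C) + pr P (~` A `&` C).
Proof.
move=> mA mC; rewrite (@pr_split _ A _ mA) //.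
by congr (pr P _ + pr P _); seteq.
Qed.

Lemma pr_setT : pr P setT = 1.
Proof. by rewrite /pr probability_setT. Qed.

Section ints.
Variables (Y : {RV P >-> R}) (iY : P.-integrable setT (EFin \o Y)).
Let I (S : set T) := fine (\int[P]_(w in S) (Y w)%:E)%E.

Lemma int_split (A E : set T) : measurable A -> measurable E ->
  I A = I (A `&` E) + I (A `&` ~` E).
Proof.
move=> mA mE.
have mAE : measurable (A `&` E) by exact: measurableI.
have mAE' : measurable (A `&` ~` E) by apply: measurableI => //; exact: measurableC.
have mY : measurable_fun setT (EFin \o Y) by apply/measurable_EFinP; exact: measurable_funP.
rewrite /I -fineD.
- rewrite -integral_setU //; last first.
  + by rewrite /disj_set; apply/eqP; seteq.
  + exact: measurable_funTS.
  by rewrite -setIUr setUv setIT.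
- exact: integrable_fin_num (@integrableS _ _ _ P setT _ (EFin \o Y) measurableT mAE (subsetT _) iY).
- exact: integrable_fin_num (@integrableS _ _ _ P setT _ (EFin \o Y) measurableT mAE' (subsetT _) iY).
Qed.

Lemma int_splitM (A C D : set T) : measurable A -> measurable C -> measurable D ->
  I (A `&` D) = I (A `&` C `&` D) + I (A `&` ~` C `&` D).
Proof.
move=> mA mC mD; rewrite (@int_split _ C _ mC); last exact: measurableI.
by congr (_ + _); congr (_ _); seteq.
Qed.

End ints.

End M.

Theorem corollary1 (R : realType) (d : measure_display) (T : measurableType d)
  (P : probability T R) (EA EC ED : set T) (Y : {RV P >-> R})
  (mA : measurable EA) (mC : measurable EC) (mD : measurable ED)
  (iY : P.-integrable setT (EFin \o Y))
  (* factorization p(A,C,D,Y) = p(C) p(D|C) p(A|C) p(Y|A,C) *)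
  (fact : forall (x y z : bool) (B : set R), measurable B ->
     pr P (ev x EA `&` ev y EC `&` ev z ED `&` (Y @^-1` B)) =
     pr P (ev y EC) * cpr P (ev z ED) (ev y EC) * cpr P (ev x EA) (ev y EC)
       * cpr P (Y @^-1` B) (ev x EA `&` ev y EC))
  (* C and D are dependent *)
  (dep : ~ (forall y z : bool,
        pr P (ev y EC `&` ev z ED) = pr P (ev y EC) * pr P (ev z ED)))
  (pos : forall x y z : bool, 0 < pr P (ev x EA `&` ev y EC `&` ev z ED))
  (mono : monotone_in_D P EA ED Y) :
  Num.min (RD_true P EA EC Y) (RD_crude P EA Y) <= RD_obs P EA ED Y <=
  Num.max (RD_true P EA EC Y) (RD_crude P EA Y).
Proof.
have mev : forall (b : bool) (E : set T), measurable E -> measurable (ev b E).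
  by move=> [] E mE //=; exact: measurableC.
have mA' b := mev b _ mA; have mC' b := mev b _ mC; have mD' b := mev b _ mD.
pose u y z := pr P (ev y EC `&` ev z ED).
pose cy y := pr P (ev y EC).
pose pAC x y := pr P (ev x EA `&` ev y EC).
pose pi x y z := pr P (ev x EA `&` ev y EC `&` ev z ED).
pose I S := fine (\int[P]_(w in S) (Y w)%:E)%E.
pose J x y z := I (ev x EA `&` ev y EC `&` ev z ED).
pose m x y := EYAC P EA EC Y x y.
pose r y := pAC true y / cy y.
pose a (x y : bool) := if x then r y else 1 - r y.
have FpAC x y : pAC x y = pi x y true + pi x y false.
  by apply: pr_split => //; apply: measurableI.
have Fu y z : u y z = pi true y z + pi false y z.
  exact: pr_splitA.
have Fcy y : cy y = u y true + u y false.
  exact: pr_split.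
have FcyA y : cy y = pAC true y + pAC false y.
  exact: pr_splitA1.
have FD z : pr P (ev z ED) = u true z + u false z.
  exact: pr_splitA1.
have FA x : pr P (ev x EA) = pAC x true + pAC x false.
  exact: pr_split.
have FAD x z : pr P (ev x EA `&` ev z ED) = pi x true z + pi x false z.
  exact: pr_splitM.
have Fsum : cy true + cy false = 1.
  rewrite -(@pr_setT _ _ _ P) (@pr_splitA1 _ _ _ P EC setT mC measurableT).
  by rewrite !setIT.
have GAC x y : I (ev x EA `&` ev y EC) = J x y true + J x y false.
  by apply: (@int_split _ _ _ P Y iY) => //; apply: measurableI.
have GAD x z : I (ev x EA `&` ev z ED) = J x true z + J x false z.
  exact: (@int_splitM _ _ _ P Y iY).
have GA x : I (ev x EA) = I (ev x EA `&` ev true EC) + I (ev x EA `&` ev false EC).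
  exact: (@int_split _ _ _ P Y iY).
have ppi x y z : 0 < pi x y z := pos x y z.
have ppAC x y : 0 < pAC x y by rewrite FpAC addr_gt0.
have pu y z : 0 < u y z by rewrite Fu addr_gt0.
have pcy y : 0 < cy y by rewrite Fcy addr_gt0.
have uC y z : pr P (ev z ED `&` ev y EC) = u y z by rewrite /u setIC.
have Hpi x y z : pi x y z = u y z * pAC x y / cy y.
  have := fact x y z setT measurableT.
  rewrite preimage_setT setIT /cpr setTI uC -/(pi x y z) -/(pAC x y) -/(cy y) => ->.
  have h1 := pcy y; have h2 := ppAC x y.
  by field; rewrite (gt_eqF h1) (gt_eqF h2).
have mAC x y : measurable (ev x EA `&` ev y EC) by apply: measurableI.
have mS x y z : measurable (ev x EA `&` ev y EC `&` ev z ED) by apply: measurableI.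
have HJ x y z : J x y z = u y z / cy y * I (ev x EA `&` ev y EC).
  have k0 : 0 <= u y z / cy y by apply: divr_ge0; apply: ltW.
  rewrite /J /I (@prop_int _ _ _ P Y iY _ _ (mS x y z) (mAC x y) _ k0).
    rewrite fineM //; apply: integrable_fin_num.
    by [].
    apply: (integrableS measurableT) iY => //.
  move=> B mB; rewrite fact // /cpr uC -/(cy y) -/(pAC x y).
  have -> : pr P (Y @^-1` B `&` (ev x EA `&` ev y EC)) =
     pr P (ev x EA `&` ev y EC `&` Y @^-1` B) by rewrite setIC.
  rewrite -/(pAC x y).
  have h1 := pcy y; have h2 := ppAC x y.
  by field; rewrite (gt_eqF h1) (gt_eqF h2).
have Kpi x y z : pi x y z = u y z * a x y.
  have h1 := pcy y.
  case: x; rewrite Hpi /a /r; first by rewrite mulrA.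
  rewrite (FcyA y); move: h1; rewrite FcyA => h1.
  by field; rewrite (gt_eqF h1).
have KpAC x y : pAC x y = cy y * a x y.
  have h1 := pcy y.
  case: x; rewrite /a /r; first by field; rewrite (gt_eqF h1).
  rewrite (FcyA y); move: h1; rewrite FcyA => h1.
  by field; rewrite (gt_eqF h1).
have KI x y : I (ev x EA `&` ev y EC) = pAC x y * m x y.
  have h2 := ppAC x y.
  rewrite /m /EYAC /cexp -/(I _) -/(pAC x y).
  by field; rewrite (gt_eqF h2).
have KJ x y z : J x y z = u y z * a x y * m x y.
  have h1 := pcy y.
  rewrite HJ KI KpAC.
  by field; rewrite (gt_eqF h1).
have E1 x z : EYAD P EA ED Y x z =
    ee _ (a x true) (a x false) (m x true) (m x false) (u true z) (u false z).
  rewrite /EYAD /cexp -/(I _) FAD.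
  by rewrite GAD !KJ !Kpi.
have E2 x : cexp P Y (ev x EA) =
    ee _ (a x true) (a x false) (m x true) (m x false)
       (u true true + u true false) (u false true + u false false).
  rewrite /cexp -/(I _) FA GA !KI !KpAC -!Fcy.
  by rewrite /ee; congr (_ / _); ring.
have hsum : u true true + u true false + u false true + u false false = 1.
  by rewrite -Fsum !Fcy addrA.
have hr y : 0 < r y < 1.
  have h1 := pcy y; have h2 := ppAC true y; have h3 := ppAC false y.
  apply/andP; split; first exact: divr_gt0.
  by rewrite ltr_pdivrMr // mul1r FcyA ltrDl.
have hD : u true true * u false false != u true false * u false true.
  apply/negP => /eqP hE; apply: dep => y z.
  change (u y z = cy y * pr P (ev z ED)); rewrite Fcy FD.
  have e00 : u false false = 1 - u true true - u true false - u false true by lra.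
  rewrite e00 in hE.
  by case: y; case: z; rewrite ?e00; nra.
have eD1 : pr P ED = u true true + u false true := FD true.
have eD0 : pr P (~` ED) = u true false + u false false := FD false.
have eC1 : pr P EC = u true true + u true false := Fcy true.
have eC0 : pr P (~` EC) = u false true + u false false := Fcy false.
have eA1 := E2 true; have eA0 := E2 false.
have eO11 := E1 true true; have eO10 := E1 true false.
have eO01 := E1 false true; have eO00 := E1 false false.
rewrite /= in eA1 eA0 eO11 eO10 eO01 eO00.
move: mono; rewrite /monotone_in_D /nondecreasing_in_D /nonincreasing_in_D.
rewrite eO11 eO10 eO01 eO00 => mono'.
rewrite /RD_obs /RD_true /RD_crude eO11 eO10 eO01 eO00 eD1 eD0 eC1 eC0.
change (cexp P Y (ev true EA)) with (cexp P Y EA) in eA1.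
change (cexp P Y (ev false EA)) with (cexp P Y (~` EA)) in eA0.
rewrite eA1 eA0 -/(m true true) -/(m true false) -/(m false true) -/(m false false).
apply: (@alg _ _ _ _ _ _ _ _ _ _ _ (pu true true) (pu true false) (pu false true) (pu false false) hsum (hr true) (hr false) hD mono') => //.
Qed.
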